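(* Let $\mathcal{A}=(Q,\Sigma,q_0,\Delta,F,C)$ be an SPBA such that accepting states appear only in the leaves of the condensation of $\mathcal{A}$, and there is at most one accepting state per leaf. Then $S_\omega(\mathcal{A})=\bigcup_{f\in F}S_\omega(Q,\Sigma,q_0,\Delta,\{f\},C)$.
   Context: A semi-linear set in $\mathbb{N}^d$ is a finite union of sets $\{b_0+\sum_{j=1}^\ell b_jz_j\mid z_j\in\mathbb{N}\}$ with $b_j\in\mathbb{N}^d$. A (strong reset) Parikh–Büchi automaton (SPBA) of dimension $d$ is $\mathcal{A}=(Q,\Sigma,q_0,\Delta,F,C)$ with finite $Q$, $q_0\in Q$, $F\subseteq Q$, finite $\Delta\subseteq Q\times\Sigma\times\mathbb{N}^d\times Q$, and semi-linear $C\subseteq\mathbb{N}^d$. A run on an infinite word $\alpha$ is $r=r_1r_2\cdots$ with $r_i=(p_{i-1},\alpha_i,\mathbf{v}_i,p_i)\in\Delta$, $p_0=q_0$; with $\rho(r_a\cdots r_b)=\sum_{i=a}^b\mathbf{v}_i$. Setting $k_0=0$ and letting $k_1<k_2<\cdots$ be all positions with $p_{k_i}\in F$, the run is accepting if this sequence is infinite and $\rho(r_{k_{i-1}+1}\cdots r_{k_i})\in C$ for all $i\ge1$. $S_\omega(\mathcal{A})$ is the set of infinite words with an accepting run. The underlying graph of $\mathcal{A}$ has vertex set $Q$ and an edge $(p,q)$ iff some transition goes from $p$ to $q$. A strongly connected component (SCC) is a maximal set of mutually reachable vertices. The condensation is the DAG of SCCs with an edge $(U,V)$ iff some $u\in U$,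 $v\in V$ have an edge $(u,v)$; its leaves are SCCs without outgoing edges. *)

(* Defs.v *)
From mathcomp Require Import all_boot.
Set Implicit Arguments. Unset Strict Implicit. Unset Printing Implicit Defensive.

Definition vec (d : nat) := {ffun 'I_d -> nat}.

Definition linear_set d (b0 : vec d) (bs : seq (vec d)) (v : vec d) : Prop :=
  exists zs : seq nat, size zs = size bs /\
    forall k : 'I_d,
      v k = b0 k + \sum_(j < size bs) nth 0 zs j * (nth b0 bs j) k.

Definition semilinear d (C : vec d -> Prop) : Prop :=
  exists L : seq (vec d * seq (vec d)),
    forall v, C v <-> exists p, p \in L /\ linear_set p.1 p.2 v.

Definition trans (Q Sigma : Type) d := (Q * Sigma * vec d * Q)%type.
Definition tsrc Q Sigma d (t : trans Q Sigma d) : Q := t.1.1.1.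
Definition tlab Q Sigma d (t : trans Q Sigma d) : Sigma := t.1.1.2.
Definition tvec Q Sigma d (t : trans Q Sigma d) : vec d := t.1.2.
Definition ttgt Q Sigma d (t : trans Q Sigma d) : Q := t.2.

Section SPBA.
Variables (Q Sigma : finType) (d : nat).
Variables (q0 : Q) (Delta : seq (trans Q Sigma d)) (F : {set Q}) (C : vec d -> Prop).

(* A run r = r_1 r_2 ...; here [r i] stands for r_{i+1}. *)
Definition is_run (alpha : nat -> Sigma) (r : nat -> trans Q Sigma d) : Prop :=
  tsrc (r 0) = q0 /\
  (forall i, r i \in Delta) /\
  (forall i, tlab (r i) = alpha i) /\
  (forall i, ttgt (r i) = tsrc (r i.+1)).

Definition rstate (r : nat -> trans Q Sigma d) (k : nat) : Q :=
  if k is k'.+1 then ttgt (r k') else q0.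

(* rho(r_{a+1} ... r_b) *)
Definition rho (r : nat -> trans Q Sigma d) (a b : nat) : vec d :=
  [ffun k => \sum_(a <= i < b) tvec (r i) k].

(* k_0 = 0, k_1 < k_2 < ... all positions k >= 1 with p_k in F;
   accepting iff infinitely many such positions and every segment
   between consecutive ones has rho in C. *)
Definition accepting (r : nat -> trans Q Sigma d) : Prop :=
  (forall n, exists k, n < k /\ rstate r k \in F) /\
  (forall a b, a < b -> (a = 0 \/ rstate r a \in F) -> rstate r b \in F ->
     (forall k, a < k < b -> rstate r k \notin F) ->
     C (rho r a b)).

Definition S_omega (alpha : nat -> Sigma) : Prop :=
  exists r, is_run alpha r /\ accepting r.

Definition edge : rel Q :=
  fun p q => has (fun t => (tsrc t == p) && (ttgt t == q)) Delta.

Definition scc (u : Q) : {set Q} :=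
  [set v | connect edge u v && connect edge v u].

Definition leaf_scc (U : {set Q}) : Prop :=
  forall u v, u \in U -> edge u v -> scc v = U.

End SPBA.

(* Main.v *)
Require Import Defs.
From mathcomp Require Import all_boot.

Lemma scc_eq (Q Sigma : finType) d (Delta : seq (trans Q Sigma d)) (u v : Q) :
  v \in scc Delta u -> scc Delta v = scc Delta u.
Proof.
rewrite inE => /andP [uv vu]; apply/setP => w; rewrite !inE.
apply/andP/andP => [[vw wv]|[uw wu]]; split.
- exact: connect_trans uv vw.
- exact: connect_trans wv vu.
- exact: connect_trans vu uw.
- exact: connect_trans wu uv.
Qed.

Lemma scc_self (Q Sigma : finType) d (Delta : seq (trans Q Sigma d)) (u : Q) :
  u \in scc Delta u.
Proof. by rewrite inE connect0. Qed.

Lemma edge_step (Q Sigma : finType) d (q0 : Q) (Delta : seq (trans Q Sigma d))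
  alpha r j : is_run q0 Delta alpha r ->
  edge Delta (rstate q0 r j) (rstate q0 r j.+1).
Proof.
move=> [h0 [hD [_ hn]]]; apply/hasP; exists (r j) => //.
rewrite /rstate /=; case: j => [|j] /=; first by rewrite h0 !eqxx.
by rewrite hn !eqxx.
Qed.

Lemma stay (Q Sigma : finType) d (q0 : Q) (Delta : seq (trans Q Sigma d)) alpha r
  (f : Q) : is_run q0 Delta alpha r -> leaf_scc Delta (scc Delta f) ->
  forall j m, rstate q0 r j \in scc Delta f -> rstate q0 r (j + m) \in scc Delta f.
Proof.
move=> hr hl j m hj; elim: m => [|m IH]; first by rewrite addn0.
rewrite addnS; have := hl _ _ IH (@edge_step _ _ _ _ _ _ _ (j + m) hr) => <-.
exact: scc_self.
Qed.

Theorem corollary3 (Q Sigma : finType) (d : nat) (q0 : Q)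
  (Delta : seq (trans Q Sigma d)) (F : {set Q}) (C : vec d -> Prop) :
  semilinear C ->
  (forall f, f \in F -> leaf_scc Delta (scc Delta f)) ->
  (forall f g, f \in F -> g \in F -> scc Delta f = scc Delta g -> f = g) ->
  forall alpha : nat -> Sigma,
    S_omega q0 Delta F C alpha <->
    exists2 f, f \in F & S_omega q0 Delta [set f] C alpha.
Proof.
move=> _ hleaf huniq alpha.
have key : forall r j k, is_run q0 Delta alpha r -> j <= k ->
    rstate q0 r j \in F -> rstate q0 r k \in F -> rstate q0 r j = rstate q0 r k.
  move=> r j k hr hjk hj hk.
  have := @stay _ _ _ _ _ _ _ _ hr (hleaf _ hj) j (k - j) (@scc_self _ _ _ _ _).
  rewrite subnKC // => /scc_eq hs.
  by apply: huniq => //; rewrite hs.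
have transfer : forall r (G : {set Q}), is_run q0 Delta alpha r ->
    (forall j, (rstate q0 r j \in F) = (rstate q0 r j \in G)) ->
    accepting q0 F C r -> accepting q0 G C r.
  move=> r G hr hF [h1 h2]; split.
    by move=> n; have [k [? ?]] := h1 n; exists k; rewrite -hF.
  move=> a b ab ha hb hk; apply: h2 => //.
  - by rewrite hF.
  - by rewrite hF.
  - by move=> k hk'; rewrite hF; apply: hk.
have transfer' : forall r (G : {set Q}), is_run q0 Delta alpha r ->
    (forall j, (rstate q0 r j \in F) = (rstate q0 r j \in G)) ->
    accepting q0 G C r -> accepting q0 F C r.
  move=> r G hr hF [h1 h2]; split.
    by move=> n; have [k [? ?]] := h1 n; exists k; rewrite hF.
  move=> a b ab ha hb hk; apply: h2 => //.
  - by rewrite -hF.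
  - by rewrite -hF.
  - by move=> k hk'; rewrite -hF; apply: hk.
split.
- move=> [r [hr hacc]].
  have hex : exists k, rstate q0 r k \in F.
    by have [k [_ hk]] := hacc.1 0; exists k.
  case: (ex_minnP hex) => k hk hmin.
  exists (rstate q0 r k) => //; exists r; split => //.
  apply: (transfer r) => // j.
  rewrite inE; apply/idP/eqP => [hj|->] //.
  case: (leqP k j) => hkj.
    by rewrite (key r k j hr hkj hk hj).
  by have := hmin _ hj; rewrite leqNgt hkj.
- move=> [f hf [r [hr hacc]]]; exists r; split => //.
  apply: (transfer' r [set f]) => // j.
  rewrite inE; apply/idP/eqP => [hj|->] //.
  have [k [hjk hk]] := hacc.1 j; move: hk; rewrite inE => /eqP hk.
  by rewrite (key r j k hr (ltnW hjk) hj) ?hk.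
Qed.
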